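(* Assume $n$ is even. A line $\ell$ of $\mathrm{PG}(n-1,q)$ has the property that $j(\ell)$ is a line if and only if $\ell\in\mathcal D$. Equivalently, for distinct points $Fa,Fb$, the image under $j$ of the line through $Fa$ and $Fb$ is a line if and only if $F(ab^{-1})=C$.
   Context: Let $q$ be a prime power, $F=\mathbb F_q$, $n\ge 2$ an integer, and $L=\mathbb F_{q^n}\supseteq F$. Regard $L$ as an $n$-dimensional $F$-vector space; $\mathrm{PG}(n-1,q)$ denotes the projective space whose points are the one-dimensional $F$-subspaces $Fx$, $x\in L^*$, and whose lines are the two-dimensional $F$-subspaces (identified with their sets of points). Define $j:\mathrm{PG}(n-1,q)\to\mathrm{PG}(n-1,q)$ by $j(Fx)=Fx^{-1}$. When $n$ is even, $C$ denotes the unique subfield of $L$ of order $q^2$; for $x\in L^*$, $Cx$ is a two-dimensional $F$-subspace of $L$, regarded as a line of $\mathrm{PG}(n-1,q)$, and $\mathcal D=\{Cx: x\in L^*\}$ is the Desarguesian line spread. *)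

(* Defs.v *)
From HB Require Import structures.
From mathcomp Require Import all_boot all_order all_algebra all_field.
Set Implicit Arguments. Unset Strict Implicit. Unset Printing Implicit Defensive.
Import GRing.Theory.
Local Open Scope ring_scope.

(* L is an F-vector space (F = GF(q) finite field, L a finite extension of F
   of degree n = \dim {:L}); PG(n-1,q) is modelled by F-subspaces of L. *)
Section PG.
Variables (F : finFieldType) (L : fieldExtType F).

Definition is_point (P : {vspace L}) : bool := \dim P == 1%N.
Definition is_line (l : {vspace L}) : bool := \dim l == 2%N.

(* the map j on points: j(Fx) = F x^{-1} (independent of the chosen x) *)
Definition jmap (P : {vspace L}) : {vspace L} := <[ (vpick P)^-1 ]>%VS.

Definition j_image (l : {vspace L}) : {vspace L} -> Prop :=
  fun P => exists2 Q : {vspace L}, is_point Q && (Q <= l)%VS & P = jmap Q.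

Definition is_line_set (S : {vspace L} -> Prop) : Prop :=
  exists m : {vspace L}, is_line m /\
    forall P : {vspace L}, (is_point P && (P <= m)%VS) <-> S P.

Definition in_desarg (C : {vspace L}) (l : {vspace L}) : Prop :=
  exists x : L, x != 0 /\ l = (C * <[x]>)%VS.
End PG.

(* Main.v *)
Require Import Defs.
From HB Require Import structures.
From mathcomp Require Import all_boot all_order all_algebra all_field.
From mathcomp Require Import ring.
Import GRing.Theory.
Local Open Scope ring_scope.

Set Implicit Arguments. Unset Strict Implicit.
Section Aux.
Variables (F : finFieldType) (L : fieldExtType F).
Implicit Types (x y a b : L) (U V P Q : {vspace L}).

Lemma subfield_uniq (K1 K2 : {subfield L}) :
  \dim K1 = \dim K2 -> (K1 : {vspace L}) = K2.
Proof.
move=> hd; apply/vspaceP => x.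
by rewrite !Fermat's_little_theorem hd.
Qed.

Lemma adj_eqC (C : {subfield L}) t : \dim C = 2%N -> \dim <<1%VS; t>> = 2%N ->
  <<1%VS; t>>%VS = (C : {vspace L}).
Proof. by move=> h1 h2; apply: subfield_uniq; rewrite h1 h2. Qed.

Lemma vline_scale x (c : F) : c != 0 -> <[c *: x]>%VS = <[x]>%VS.
Proof.
move=> c0; apply/eqP; rewrite eqEdim !dim_vline scaler_eq0 (negPf c0) /= leqnn andbT.
by rewrite -memvE memvZ ?memv_line.
Qed.

Lemma point_vpick P : is_point P -> P = <[vpick P]>%VS.
Proof.
rewrite /is_point => /eqP hP; apply/esym/eqP; rewrite eqEdim -memvE memv_pick /=.
rewrite hP dim_vline vpick0 -dimv_eq0 hP //.
Qed.

Lemma vpick_neq0 P : is_point P -> vpick P != 0.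
Proof. by rewrite /is_point vpick0 -dimv_eq0 => /eqP ->. Qed.

Lemma jmap_line x : x != 0 -> jmap <[x]>%VS = <[x^-1]>%VS.
Proof.
move=> x0; rewrite /jmap.
have := memv_pick <[x]>%VS => /vlineP [k hk].
have k0 : k != 0.
  apply/negP => /eqP k0; move: hk; rewrite k0 scale0r => /eqP.
  by rewrite vpick0 -dimv_eq0 dim_vline x0.
by rewrite hk invrZ ?unitfE // vline_scale ?invr_eq0.
Qed.

Lemma is_point_line x : x != 0 -> is_point <[x]>%VS.
Proof. by move=> x0; rewrite /is_point dim_vline x0. Qed.

Lemma mem_prod_line (K : {vspace L}) x y : x != 0 ->
  reflect (exists2 k, k \in K & y = k * x) (y \in (K * <[x]>)%VS).
Proof.
move=> x0.
have -> : (K * <[x]>)%VS = (amulr x @: K)%VS.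
  apply: subv_anti; apply/andP; split.
    apply/prodvP => u v uK /vlineP [c ->].
    rewrite -scalerAr.
    by apply: memvZ; have := memv_img (amulr x) uK; rewrite lfunE.
  apply/subvP => _ /memv_imgP [u uK ->]; rewrite lfunE /=.
  by apply: memv_mul => //; apply: memv_line.
apply: (iffP memv_imgP) => [[u uK ->]|[u uK ->]]; exists u => //;
  by rewrite lfunE.
Qed.


Lemma dim_prod_line (K : {vspace L}) x : x != 0 -> \dim (K * <[x]>) = \dim K.
Proof.
move=> x0.
have -> : (K * <[x]>)%VS = (amulr x @: K)%VS.
  apply: subv_anti; apply/andP; split.
    apply/prodvP => u v uK /vlineP [c ->].
    rewrite -scalerAr.
    by apply: memvZ; have := memv_img (amulr x) uK; rewrite lfunE.
  apply/subvP => _ /memv_imgP [u uK ->]; rewrite lfunE /=.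
  by apply: memv_mul => //; apply: memv_line.
apply: limg_dim_eq.
by rewrite (eqP (lker0_amulr _)) ?capv0 // unitfE.
Qed.


Lemma in1 (c : F) : c%:A \in (1%VS : {vspace L}).
Proof. by rewrite memvZ // memv_line. Qed.

Lemma quad_deg (C : {subfield L}) t (A B : F) : \dim C = 2%N -> t \notin (1%VS : {vspace L}) ->
  B%:A * t^+2 + (A%:A + B%:A - 1) * t + A%:A = 0 -> <<1%VS; t>>%VS = (C : {vspace L}).
Proof.
move=> dC t1 E.
have t0 : t != 0 by apply: contraNneq t1 => ->; rewrite mem0v.
have [B0|B0] := eqVneq B 0.
  exfalso; move: E; rewrite B0 scale0r mul0r add0r addr0.
  have [A1|A1] := eqVneq A 1.
    by rewrite A1 scale1r subrr mul0r add0r => /eqP; rewrite oner_eq0.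
  move=> E; apply: (negP t1).
  have -> : t = (A - 1)^-1 *: (- A%:A).
    have E' : - A%:A = (A - 1) *: t.
      by apply/esym/eqP; rewrite -addr_eq0 scalerBl scale1r; move: E; rewrite mulrBl mul1r mulr_algl => ->.
    by rewrite E' scalerA mulVf ?subr_eq0 // scale1r.
  by rewrite memvZ // rpredN in1.
apply: adj_eqC => //.
set A' : L := A%:A; set B' : L := B%:A.
have B'0 : B' != 0 by rewrite /B' -in_algE fmorph_eq0.
pose p : {poly L} := ('X + ((A' + B' - 1) / B')%:P) * 'X + (A' / B')%:P.
have cin1 : (A' + B' - 1) / B' \in (1%VS : {vspace L}).
  have -> : (A' + B' - 1) / B' = ((A + B - 1) / B)%:A.
    by rewrite /A' /B' -!in_algE rmorphM rmorphB rmorphD rmorph1 fmorphV.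
  exact: in1.
have din1 : A' / B' \in (1%VS : {vspace L}).
  have -> : A' / B' = (A / B)%:A by rewrite /A' /B' -!in_algE rmorphM fmorphV.
  exact: in1.
have sp : size p = 3%N by rewrite /p size_MXaddC -size_poly_eq0 size_XaddC.
have p0 : p != 0 by rewrite -size_poly_eq0 sp.
have rp : root p t.
  rewrite /root; apply/eqP.
  have -> : p.[t] = (B' * t^+2 + (A' + B' - 1) * t + A') / B'.
    rewrite /p hornerMXaddC hornerD hornerX hornerC; field; done.
  by rewrite E mul0r.
have pO : p \is a polyOver (1%AS : {subfield L}).
  by rewrite rpredD ?rpredM ?polyOverX ?polyOverC // polyOverXaddC.
have := dvdp_leq p0 (minPoly_dvdp pO rp).
rewrite size_minPoly sp ltnS => hle.
have hdim : \dim <<1%VS; t>> = adjoin_degree 1%AS t.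
  by rewrite adjoin_degreeE dimv1 divn1.
rewrite hdim; apply: anti_leq; rewrite hle /=.
rewrite ltn_neqAle eq_sym adjoin_deg_eq1; apply/andP; split; first exact: t1.
rewrite lt0n; apply/eqP => h0; move: hdim; rewrite [adjoin_degree _ _]h0 => /eqP.
rewrite dimv_eq0 => /eqP.
move=> h; have := memv_adjoin 1%VS t; rewrite h memv0 => /eqP ht.
by rewrite ht eqxx in t0.
Qed.


Lemma notin_line a b : a != 0 -> b != 0 -> <[a]>%VS != <[b]>%VS -> b \notin <[a]>%VS.
Proof.
move=> a0 b0 ab; apply/negP => hb; apply: (negP ab).
by rewrite eq_sym eqEdim -memvE hb !dim_vline a0 b0.
Qed.

Lemma dim2 a b : a != 0 -> b \notin <[a]>%VS -> \dim (<[a]> + <[b]>)%VS = 2%N.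
Proof.
move=> a0 hb.
have b0 : b != 0 by apply: contraNneq hb => ->; rewrite mem0v.
rewrite dimv_disjoint_sum ?dim_vline ?a0 ?b0 //.
apply/eqP; rewrite -subv0; apply/subvP => c /memv_capP [/vlineP [al ->] /vlineP [be hbe]].
have [be0|be0] := eqVneq be 0.
  by rewrite hbe be0 scale0r mem0v.
exfalso; apply: (negP hb).
have -> : b = (be^-1 * al) *: a by rewrite -scalerA hbe scalerA mulVf // scale1r.
by rewrite memvZ ?memv_line.
Qed.

Lemma t_notin1 a b : a != 0 -> b != 0 -> <[a]>%VS != <[b]>%VS ->
  a * b^-1 \notin (1%VS : {vspace L}).
Proof.
move=> a0 b0 ab; apply/negP => /vlineP [c hc]; apply: (negP ab).
have ha : a = c *: b by rewrite -mulr_algl -hc mulfVK.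
have c0 : c != 0 by apply: contraNneq a0 => c0; rewrite ha c0 scale0r.
by rewrite ha vline_scale.
Qed.

Lemma key_forward (C : {subfield L}) a b : \dim C = 2%N ->
  a != 0 -> b != 0 -> <[a]>%VS != <[b]>%VS ->
  (a + b)^-1 \in (<[a^-1]> + <[b^-1]>)%VS -> <<1%VS; a * b^-1>>%VS = (C : {vspace L}).
Proof.
move=> dC a0 b0 ab /memv_addP [u /vlineP [al ->] [v /vlineP [be ->] E]].
have ab0 : a + b != 0.
  apply: contraNneq ab => /eqP; rewrite addr_eq0 => /eqP ->.
  by rewrite -scaleN1r vline_scale // oppr_eq0 oner_eq0.
apply: (@quad_deg C _ al be) => //; first exact: t_notin1.
have -> : be%:A * (a * b^-1) ^+ 2 + (al%:A + be%:A - 1) * (a * b^-1) + al%:A =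
   (a * (a + b) / b) * (al%:A * a^-1 + be%:A * b^-1 - (a + b)^-1).
  by field; rewrite a0 b0 ab0.
by rewrite !mulr_algl E subrr mulr0.
Qed.


Lemma G (K : {subfield L}) x : \dim K = 2%N -> x != 0 -> is_line_set (j_image (K * <[x]>)%VS).
Proof.
move=> dK x0; exists (K * <[x^-1]>)%VS; split.
  by rewrite /is_line dim_prod_line ?invr_eq0 // dK.
move=> P; split.
- case/andP => hP /subvP hsub.
  have p0 := vpick_neq0 hP.
  have := hsub _ (memv_pick P).
  case/(mem_prod_line _ _ (invr_neq0 x0)) => k kK hk.
  have k0 : k != 0 by apply: contraNneq p0 => k0; rewrite hk k0 mul0r.
  exists <[(vpick P)^-1]>%VS.
    rewrite is_point_line ?invr_eq0 //= -memvE.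
    apply/mem_prod_line => //; exists k^-1; first by rewrite rpredV.
    by rewrite hk invfM invrK.
  by rewrite jmap_line ?invr_eq0 // invrK; exact: point_vpick.
- case => Q /andP [hQ /subvP hsub] ->.
  have q0 := vpick_neq0 hQ.
  have := hsub _ (memv_pick Q).
  case/(mem_prod_line _ _ x0) => k kK hk.
  rewrite /jmap is_point_line ?invr_eq0 //= -memvE.
  apply/mem_prod_line; first by rewrite invr_eq0.
  by exists k^-1; rewrite ?rpredV // hk invfM.
Qed.

Lemma E (C : {subfield L}) a b : \dim C = 2%N -> a != 0 -> b != 0 -> <[a]>%VS != <[b]>%VS ->
  a * b^-1 \in C -> (<[a]> + <[b]>)%VS = (C * <[b]>)%VS.
Proof.
move=> dC a0 b0 ab hC.
apply/eqP; rewrite eqEdim dim_prod_line // dC dim2 ?notin_line // leqnn andbT.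
rewrite subv_add -!memvE; apply/andP; split; apply/mem_prod_line => //.
  by exists (a * b^-1) => //; rewrite mulfVK.
by exists 1; [exact: mem1v | rewrite mul1r].
Qed.

Lemma decomp l : is_line l ->
  exists a, exists b, [/\ a != 0, b != 0, <[a]>%VS != <[b]>%VS & l = (<[a]> + <[b]>)%VS].
Proof.
rewrite /is_line => /eqP dl.
set a := vpick l.
have a0 : a != 0 by rewrite vpick0 -dimv_eq0 dl.
have : ~~ (l <= <[a]>)%VS by apply/negP => /dimvS; rewrite dl dim_vline a0.
case/subvPn => b bl bna.
have b0 : b != 0 by apply: contraNneq bna => ->; rewrite mem0v.
exists a, b; split => //.
  by apply: contraNneq bna => ->; exact: memv_line.
by apply/esym/eqP; rewrite eqEdim dl dim2 // leqnn andbT subv_add -!memvE memv_pick bl.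
Qed.

Lemma ab_neq0 a b : a != 0 -> b != 0 -> <[a]>%VS != <[b]>%VS -> a + b != 0.
Proof.
move=> a0 b0 ab; apply: contraNneq ab => /eqP; rewrite addr_eq0 => /eqP ->.
by rewrite -scaleN1r vline_scale // oppr_eq0 oner_eq0.
Qed.

Lemma p2fwd (C : {subfield L}) a b : \dim C = 2%N -> a != 0 -> b != 0 -> <[a]>%VS != <[b]>%VS ->
  is_line_set (j_image (<[a]> + <[b]>)%VS) -> <<1%VS; a * b^-1>>%VS = (C : {vspace L}).
Proof.
move=> dC a0 b0 ab [m [hm hP]].
have inm y : y != 0 -> y \in (<[a]> + <[b]>)%VS -> y^-1 \in m.
  move=> y0 yl.
  have : is_point <[y^-1]>%VS && (<[y^-1]> <= m)%VS.
    apply/(hP _).2; exists <[y]>%VS; first by rewrite is_point_line //= -memvE.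
    by rewrite jmap_line.
  by case/andP => _; rewrite -memvE.
have ina : a \in (<[a]> + <[b]>)%VS by apply: (subvP (addvSl _ _)); exact: memv_line.
have inb : b \in (<[a]> + <[b]>)%VS by apply: (subvP (addvSr _ _)); exact: memv_line.
have hsum : (<[a^-1]> + <[b^-1]>)%VS = m.
  apply/eqP; rewrite eqEdim subv_add -!memvE !inm //=.
  rewrite (eqP hm) dim2 ?invr_eq0 // notin_line ?invr_eq0 //.
  apply: contraNneq ab => h.
  by rewrite -[a]invrK -[b]invrK -(jmap_line (invr_neq0 a0)) -(jmap_line (invr_neq0 b0)) h.
apply: key_forward => //; rewrite hsum; apply: inm; first exact: ab_neq0.
by rewrite memv_add ?memv_line.
Qed.

Lemma p2bwd (C : {subfield L}) a b : \dim C = 2%N -> a != 0 -> b != 0 -> <[a]>%VS != <[b]>%VS ->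
  <<1%VS; a * b^-1>>%VS = (C : {vspace L}) -> is_line_set (j_image (<[a]> + <[b]>)%VS).
Proof.
move=> dC a0 b0 ab h; rewrite (E dC a0 b0 ab); first exact: G.
by rewrite -h memv_adjoin.
Qed.

End Aux.
Unset Implicit Arguments. Set Strict Implicit.

Theorem mainTheorem5 (F : finFieldType) (L : fieldExtType F) (C : {subfield L}) :
  ~~ odd (\dim {:L}) -> (2 <= \dim {:L})%N -> \dim C = 2%N ->
  (forall l : {vspace L}, is_line l ->
     (is_line_set (j_image l) <-> in_desarg C l)) /\
  (forall a b : L, a != 0 -> b != 0 -> <[a]>%VS != <[b]>%VS ->
     (is_line_set (j_image (<[a]> + <[b]>)%VS)
       <-> (<<1%VS; a * b^-1>>%VS = (C : {vspace L})))).
Proof.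
move=> _ _ dC; split.
  move=> l /decomp [a [b [a0 b0 ab ->]]]; split.
    move=> h; exists b; split => //; apply: E => //.
    by rewrite -(p2fwd dC a0 b0 ab h) memv_adjoin.
  by case=> x [x0 ->]; exact: G.
move=> a b a0 b0 ab; split; [exact: p2fwd | exact: p2bwd].
Qed.
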